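(* Every geodesic $s\mapsto\mathbf t(s)$ of the quasi-Euclidean space $(\mathbb{R}^N\setminus\{0\},\,n_{pq}(g;t))$ lies in a two-dimensional linear subspace of $\mathbb{R}^N$ (through the origin); that is, the geodesics are plane curves.
   Context: Let $N\ge2$; $(r_{pq})$ is a symmetric positive-definite $N\times N$ matrix with $r_{NN}=1$, $r_{Na}=0$ ($a<N$), $S(t)=\sqrt{r_{pq}t^pt^q}$, $L_p=r_{pq}t^q/S(t)$. Fix $g\in(-2,2)$, $h=\sqrt{1-g^2/4}$, $G=g/h$. The quasi-Euclidean metric tensor is $n_{pq}(g;t)=\frac1{h^2}r_{pq}-\frac14G^2L_pL_q$, and geodesics are solutions of the Levi-Civita geodesic equation $\frac{d^2t^p}{ds^2}+N_q{}^p{}_r\frac{dt^q}{ds}\frac{dt^r}{ds}=0$, where $N_q{}^p{}_r$ are the Christoffel symbols of $n_{pq}$. *)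

(* Defs.v *)
From HB Require Import structures.
From mathcomp Require Import all_boot all_order all_algebra.
From mathcomp Require Import all_classical all_reals all_analysis.
Set Implicit Arguments. Unset Strict Implicit. Unset Printing Implicit Defensive.
Import Order.TTheory GRing.Theory Num.Theory.
Import numFieldNormedType.Exports.
Local Open Scope classical_set_scope.
Local Open Scope ring_scope.

Section QuasiEuclid.
Variables (R : realType) (N : nat).

Definition posdef (r : 'M[R]_N) : Prop :=
  forall v : 'rV[R]_N, v != 0 -> 0 < \sum_(p < N) \sum_(q < N) r p q * v 0 p * v 0 q.

Definition Sfun (r : 'M[R]_N) (t : 'rV[R]_N) : R :=
  Num.sqrt (\sum_(p < N) \sum_(q < N) r p q * t 0 p * t 0 q).

Definition Lfun (r : 'M[R]_N) (t : 'rV[R]_N) (p : 'I_N) : R :=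
  (\sum_(q < N) r p q * t 0 q) / Sfun r t.

Definition hpar (g : R) : R := Num.sqrt (1 - g ^+ 2 / 4).
Definition Gpar (g : R) : R := g / hpar g.

Definition nmetric (g : R) (r : 'M[R]_N) (t : 'rV[R]_N) : 'M[R]_N :=
  \matrix_(p, q) (r p q / hpar g ^+ 2 - Gpar g ^+ 2 / 4 * Lfun r t p * Lfun r t q).

Definition pderiv (F : 'rV[R]_N -> R) (k : 'I_N) (t : 'rV[R]_N) : R :=
  derive1 (fun x : R => F (t + x *: delta_mx 0 k)) 0.

Definition christoffel (g : R) (r : 'M[R]_N) (t : 'rV[R]_N) (q p s : 'I_N) : R :=
  2^-1 * \sum_(m < N) (invmx (nmetric g r t)) p m *
    (pderiv (fun x => nmetric g r x m s) q t
     + pderiv (fun x => nmetric g r x m q) s t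
     - pderiv (fun x => nmetric g r x q s) m t).

Definition coord (c : R -> 'rV[R]_N) (p : 'I_N) : R -> R := fun s => c s 0 p.

Definition is_geodesic (g : R) (r : 'M[R]_N) (I : set R) (c : R -> 'rV[R]_N) : Prop :=
  (forall s, I s -> c s != 0) /\
  (forall s p, I s -> derivable (coord c p) s 1 /\ derivable (derive1 (coord c p)) s 1) /\
  (forall s p, I s ->
     derive1 (derive1 (coord c p)) s
     + \sum_(q < N) \sum_(k < N)
         christoffel g r (c s) q p k * derive1 (coord c q) s * derive1 (coord c k) s = 0).

End QuasiEuclid.

(* Main.v *)
Require Import Defs.
From HB Require Import structures.
From mathcomp Require Import all_boot all_order all_algebra.
From mathcomp Require Import all_classical all_reals all_analysis.
From mathcomp Require Import ring lra.
Set Implicit Arguments. Unset Strict Implicit. Unset Printing Implicit Defensive.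
Import Order.TTheory GRing.Theory Num.Theory.
Import numFieldNormedType.Exports.
Local Open Scope classical_set_scope.
Local Open Scope ring_scope.

Lemma poly2_der (R : realType) (a b c : R) : is_derive (0:R) 1 (fun x : R => a + x * b + x ^+ 2 * c) b.
Proof.
have -> : (fun x : R => a + x * b + x ^+ 2 * c) = (cst a + (@id R * cst b) + (@id R ^+ 2 * cst c)).
  by apply/funext => x /=.
apply: is_derive_eq.
rewrite /= !scaler0 mulr0 !add0r scale0r scaler0 addr0. by rewrite [_%:A]mulr1.
Qed.

Lemma lin_der (R : realType) (a b : R) : is_derive (0:R) 1 (fun x : R => a + x * b) b.
Proof.
have -> : (fun x : R => a + x * b) = (fun x : R => a + x * b + x ^+ 2 * 0).
  by apply/funext => x /=; rewrite mulr0 addr0.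
exact: poly2_der.
Qed.

Lemma sqrt_der (R : realType) (P : R -> R) (p : R) : 0 < P 0 -> is_derive (0:R) 1 P p ->
  is_derive (0:R) 1 (fun x => Num.sqrt (P x)) ((2 * Num.sqrt (P 0))^-1 * p).
Proof.
move=> P0 dP.
exact: (@is_derive1_comp R Num.sqrt P 0 _ _ (is_derive1_sqrt P0) dP).
Qed.

Lemma cst_on_itv (R : realType) (I : set R) (f : R -> R) :
  is_interval I -> (forall x, I x -> is_derive x 1 f 0) ->
  forall a b, I a -> I b -> f a = f b.
Proof.
move=> Iitv Hd.
suff H : forall a b, a <= b -> I a -> I b -> f a = f b.
  move=> a b Ia Ib; case: (leP a b) => ab; first exact: H.
  by apply/esym/H => //; exact: ltW.
move=> a b ab Ia Ib.
have Iab : forall x, a <= x <= b -> I x by move=> x; exact: Iitv.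
have [|| c _] := @MVT_segment R f (fun _ => 0) a b ab.
- move=> x; rewrite in_itv /= => /andP[ax xb]; apply: Hd; apply: Iab.
  by rewrite !ltW.
- apply: continuous_in_subspaceT => x; rewrite inE /= in_itv /= => xab.
  have [+ _] := Hd x (Iab x xab).
  by move=> /derivable1_diffP /differentiable_continuous.
- by rewrite mul0r => /eqP; rewrite subr_eq0 => /eqP.
Qed.
Definition mk2 (R : realType) (N : nat) (x y : 'rV[R]_N) : 'M[R]_(2, N) :=
  \matrix_(i < 2, j < N) (if i == 0 then x 0 j else y 0 j).

Lemma rank2 (R : realType) (N : nat) (x y : 'rV[R]_N) a b :
  x 0 a * y 0 b - x 0 b * y 0 a != 0 -> \rank (mk2 x y) = 2%N.
Proof.
move=> D0; apply/eqP; apply: inj_row_free => u uU.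
have E j : u 0 0 * x 0 j + u 0 1 * y 0 j = 0.
  have := congr1 (fun M : 'rV_N => M 0 j) uU.
  have l1 : lift ord0 (ord0 : 'I_1) = (1 : 'I_2) by apply: val_inj.
  have l0 : (ord0 : 'I_2) = 0 by apply: val_inj.
  by rewrite !mxE big_ord_recl big_ord1 !mxE /= l1 l0 => <-.
have u0 : u 0 0 = 0.
  have : u 0 0 * (x 0 a * y 0 b - x 0 b * y 0 a) = 0.
    transitivity (y 0 b * (u 0 0 * x 0 a + u 0 1 * y 0 a)
                - y 0 a * (u 0 0 * x 0 b + u 0 1 * y 0 b)); first by ring.
    by rewrite !E !mulr0 subrr.
  by move/eqP; rewrite mulf_eq0 (negbTE D0) orbF => /eqP.
have u1 : u 0 1 = 0.
  have : u 0 1 * (x 0 a * y 0 b - x 0 b * y 0 a) = 0.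
    transitivity (x 0 a * (u 0 0 * x 0 b + u 0 1 * y 0 b)
                - x 0 b * (u 0 0 * x 0 a + u 0 1 * y 0 a)); first by ring.
    by rewrite !E !mulr0 subrr.
  by move/eqP; rewrite mulf_eq0 (negbTE D0) orbF => /eqP.
apply/matrixP => i j; rewrite (ord1 i) mxE.
case: j => [[|[|j]]] //= Hj.
- by rewrite -u0; congr (u 0 _); apply: val_inj.
- by rewrite -u1; congr (u 0 _); apply: val_inj.
Qed.

Lemma in_mk2 (R : realType) (N : nat) (x y z : 'rV[R]_N) (al be : R) :
  (forall j, z 0 j = al * x 0 j + be * y 0 j) -> (z <= mk2 x y)%MS.
Proof.
move=> H; apply/submxP; exists (\row_(i < 2) (if i == 0 then al else be)).
apply/matrixP => i j; rewrite (ord1 i) !mxE big_ord_recl big_ord1 !mxE /=.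
exact: H.
Qed.
Section Metric.
Variables (R : realType) (N : nat) (r : 'M[R]_N) (g : R).
Hypotheses (rsym : r^T = r) (rpd : posdef r) (hg : -2 < g < 2).

Definition Qf (t : 'rV[R]_N) := \sum_(p < N) \sum_(q < N) r p q * t 0 p * t 0 q.
Definition Af (t : 'rV[R]_N) (m : 'I_N) := \sum_(q < N) r m q * t 0 q.
Definition beta := Gpar g ^+ 2 / 4.

Lemma rsymE p q : r p q = r q p.
Proof. by rewrite -[in LHS]rsym mxE. Qed.

Lemma Qf_gt0 t : t != 0 -> 0 < Qf t.
Proof. exact: rpd. Qed.

Lemma S_gt0 t : t != 0 -> 0 < Sfun r t.
Proof. by move=> t0; rewrite /Sfun sqrtr_gt0; exact: Qf_gt0. Qed.

Lemma S_sq t : t != 0 -> Sfun r t ^+ 2 = Qf t.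
Proof. by move=> t0; rewrite /Sfun sqr_sqrtr // ltW // Qf_gt0. Qed.

Lemma L_def t m : Defs.Lfun r t m = Af t m / Sfun r t.
Proof. by []. Qed.

Lemma sumAt t : \sum_(q < N) Af t q * t 0 q = Qf t.
Proof.
rewrite /Qf /Af; apply: eq_bigr => q _; rewrite mulr_suml.
by apply: eq_bigr => p _; rewrite mulrAC.
Qed.

Lemma sumLt t : t != 0 -> \sum_(q < N) Defs.Lfun r t q * t 0 q = Sfun r t.
Proof.
move=> t0; have S0 := S_gt0 t0.
transitivity ((\sum_(q < N) Af t q * t 0 q) / Sfun r t).
  by rewrite mulr_suml; apply: eq_bigr => q _; rewrite /Defs.Lfun mulrAC.
by rewrite sumAt -S_sq // expr2 mulfK // gt_eqF.
Qed.

Lemma h2E : hpar g ^+ 2 = 1 - g ^+ 2 / 4.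
Proof.
rewrite /hpar sqr_sqrtr // subr_ge0.
case/andP: hg => h1 h2; nra.
Qed.

Lemma h2_gt0 : 0 < hpar g ^+ 2.
Proof.
rewrite h2E subr_gt0.
case/andP: hg => h1 h2; nra.
Qed.

Lemma key_const : (hpar g ^+ 2)^-1 - beta = 1.
Proof.
have h0 : hpar g ^+ 2 != 0 by rewrite gt_eqF // h2_gt0.
rewrite /beta /Gpar expr_div_n.
have -> : g ^+ 2 = 4 - 4 * hpar g ^+ 2 by rewrite h2E; field.
field; by apply: contra h0 => /eqP ->; rewrite expr0n.
Qed.

Lemma nmetricE t m s :
  nmetric g r t m s = r m s / hpar g ^+ 2 - beta * Defs.Lfun r t m * Defs.Lfun r t s.
Proof. by rewrite mxE. Qed.


Lemma n_t t m : t != 0 -> \sum_(q < N) nmetric g r t m q * t 0 q = Af t m.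
Proof.
move=> t0; have S0 := S_gt0 t0.
under eq_bigr => q _ do rewrite nmetricE mulrBl.
rewrite sumrB.
have -> : \sum_(q < N) r m q / hpar g ^+ 2 * t 0 q = Af t m / hpar g ^+ 2.
  by rewrite /Af mulr_suml; apply: eq_bigr => q _; rewrite mulrAC.
have -> : \sum_(q < N) beta * Defs.Lfun r t m * Defs.Lfun r t q * t 0 q
    = beta * Defs.Lfun r t m * \sum_(q < N) Defs.Lfun r t q * t 0 q.
  by rewrite mulr_sumr; apply: eq_bigr => q _; rewrite mulrA.
rewrite sumLt // L_def -mulrA divfK ?gt_eqF //.
transitivity (Af t m * ((hpar g ^+2)^-1 - beta)); first by ring.
by rewrite key_const mulr1.
Qed.

Lemma n_unit t : t != 0 -> nmetric g r t \in unitmx.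
Proof.
move=> t0; have S0 := S_gt0 t0; have hh := h2_gt0.
rewrite -row_free_unit; apply: inj_row_free => u uN0.
set L := Defs.Lfun r t.
set B := fun s => \sum_(m < N) u 0 m * r m s.
set l := \sum_(m < N) u 0 m * L m.
have E s : B s / hpar g ^+ 2 - beta * l * L s = 0.
  have := congr1 (fun M : 'rV_N => M 0 s) uN0; rewrite !mxE => <-.
  rewrite /B /l mulr_suml mulr_sumr mulr_suml -sumrB.
  by apply: eq_bigr => m _; rewrite nmetricE /L; ring.
have E2 : \sum_(s < N) (B s / hpar g ^+ 2 - beta * l * L s) * t 0 s = 0.
  by rewrite big1 // => s _; rewrite E mul0r.
have BT : \sum_(s < N) B s * t 0 s = Sfun r t * l.
  rewrite /B /l mulr_sumr.
  under eq_bigr => s _ do rewrite mulr_suml.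
  rewrite exchange_big /=; apply: eq_bigr => m _.
  rewrite /L L_def mulrCA [Sfun r t * _]mulrC divfK ?gt_eqF // /Af mulr_sumr.
  by apply: eq_bigr => s _; rewrite mulrA.
clearbody l.
have l0 : l = 0.
  move: E2; under eq_bigr => s _ do rewrite mulrBl.
  rewrite sumrB.
  have -> : \sum_(s < N) B s / hpar g ^+ 2 * t 0 s = (\sum_(s < N) B s * t 0 s) / hpar g ^+ 2.
    by rewrite mulr_suml; apply: eq_bigr => s _; rewrite mulrAC.
  have -> : \sum_(s < N) beta * l * L s * t 0 s = beta * l * \sum_(s < N) L s * t 0 s.
    by rewrite mulr_sumr; apply: eq_bigr => s _; rewrite mulrA.
  rewrite sumLt // BT.
  have -> : Sfun r t * l / hpar g ^+ 2 - beta * l * Sfun r t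
     = Sfun r t * l * ((hpar g ^+ 2)^-1 - beta) by ring.
  rewrite key_const mulr1 => /eqP; rewrite mulf_eq0 gt_eqF //= => /eqP //.
have B0 s : B s = 0.
  have := E s; rewrite l0 mulr0 mul0r subr0 => /eqP.
  by rewrite mulf_eq0 => /orP[/eqP //|]; rewrite invr_eq0 gt_eqF.
apply/eqP; apply: contraT => un0.
have := rpd un0.
have -> : \sum_(p < N) \sum_(q < N) r p q * u 0 p * u 0 q = \sum_(q < N) B q * u 0 q.
  rewrite exchange_big /=; apply: eq_bigr => q _; rewrite /B mulr_suml.
  by apply: eq_bigr => p _; rewrite (mulrC (r p q)).
by rewrite big1 ?ltxx // => q _; rewrite B0 mul0r.
Qed.

Lemma inv_A t p : t != 0 ->
  \sum_(m < N) invmx (nmetric g r t) p m * Af t m = t 0 p.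
Proof.
move=> t0.
have H : nmetric g r t *m t^T = \col_m Af t m.
  apply/matrixP => i j; rewrite !mxE (ord1 j) -(n_t i t0).
  by apply: eq_bigr => q _; rewrite !mxE.
have := congr1 (fun M : 'cV_N => M p 0) (mulKmx (n_unit t0) t^T).
rewrite H !mxE => <-; apply: eq_bigr => m _; by rewrite mxE.
Qed.

Lemma txE (t : 'rV[R]_N) (k q : 'I_N) (x : R) : (t + x *: delta_mx 0 k) 0 q = t 0 q + x * (q == k)%:R.
Proof. by rewrite !mxE eqxx. Qed.

Lemma sum_delta (F : 'I_N -> R) k : \sum_(p < N) F p * (p == k)%:R = F k.
Proof.
rewrite (bigD1 k) //= eqxx mulr1 big1 ?addr0 // => p /negbTE ->.
by rewrite mulr0.
Qed.

Lemma A_tx (t : 'rV[R]_N) (k : 'I_N) (x : R) m : Af (t + x *: delta_mx 0 k) m = Af t m + x * r m k.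
Proof.
rewrite /Af; under eq_bigr => q _ do rewrite txE mulrDr.
rewrite big_split /=; congr (_ + _).
rewrite -(sum_delta (fun q => x * r m q)); apply: eq_bigr => q _; ring.
Qed.

Lemma Qf_A t : Qf t = \sum_(p < N) t 0 p * Af t p.
Proof.
rewrite /Qf /Af; apply: eq_bigr => p _; rewrite mulr_sumr.
by apply: eq_bigr => q _; ring.
Qed.

Lemma Q_tx (t : 'rV[R]_N) (k : 'I_N) (x : R) :
  Qf (t + x *: delta_mx 0 k) = Qf t + x * (2 * Af t k) + x ^+ 2 * r k k.
Proof.
rewrite Qf_A; under eq_bigr => p _ do rewrite A_tx txE.
transitivity (\sum_(p < N) (t 0 p * Af t p + x * (t 0 p * r p k + Af t p * (p == k)%:R)
   + x ^+ 2 * (r p k * (p == k)%:R))).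
  by apply: eq_bigr => p _; ring.
rewrite !big_split /= -!mulr_sumr -Qf_A big_split /= !sum_delta.
congr (_ + _ * _ + _); rewrite mulr2n mulrDl mul1r; congr (_ + _).
by rewrite /Af; apply: eq_bigr => p _; rewrite rsymE mulrC.
Qed.

Lemma S_der (t : 'rV[R]_N) (k : 'I_N) : t != 0 ->
  is_derive (0:R) 1 (fun x => Sfun r (t + x *: delta_mx 0 k)) (Af t k / Sfun r t).
Proof.
move=> t0; have S0 := S_gt0 t0.
have -> : (fun x => Sfun r (t + x *: delta_mx 0 k)) =
   (fun x => Num.sqrt (Qf t + x * (2 * Af t k) + x ^+ 2 * r k k)).
  by apply/funext => x; rewrite -Q_tx.
have D := poly2_der (Qf t) (2 * Af t k) (r k k).
have P0 : 0 < (fun x => Qf t + x * (2 * Af t k) + x ^+ 2 * r k k) 0.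
  by rewrite /= mul0r expr0n /= mul0r !addr0; exact: Qf_gt0.
apply: is_derive_eq (sqrt_der P0 D) _.
rewrite /= mul0r expr0n /= mul0r !addr0 -/(Sfun r t).
have : Sfun r t != 0 by rewrite gt_eqF.
by move=> ?; field.
Qed.

Lemma L_der (t : 'rV[R]_N) (k m : 'I_N) : t != 0 ->
  is_derive (0:R) 1 (fun x => Defs.Lfun r (t + x *: delta_mx 0 k) m)
    ((r m k - Defs.Lfun r t m * Defs.Lfun r t k) / Sfun r t).
Proof.
move=> t0; have S0 := S_gt0 t0.
have -> : (fun x => Defs.Lfun r (t + x *: delta_mx 0 k) m) =
  (fun x => Af t m + x * r m k) * (fun x => (Sfun r (t + x *: delta_mx 0 k))^-1).
  by apply/funext => x /=; rewrite L_def A_tx.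
have H1 := lin_der (Af t m) (r m k).
have Sx0 : (fun x => Sfun r (t + x *: delta_mx 0 k)) 0 != 0.
  by rewrite /= scale0r addr0 gt_eqF.
have H2 := @is_deriveV R (fun x => Sfun r (t + x *: delta_mx 0 k)) 0 _ 1 Sx0 (S_der k t0).
apply: is_derive_eq (is_deriveM H1 H2) _.
rewrite /= scale0r addr0 mul0r addr0 !L_def.
have : Sfun r t != 0 by rewrite gt_eqF.
move=> Sn; rewrite /GRing.scale /=. by field.
Qed.

Definition dLf (t : 'rV[R]_N) (k j : 'I_N) :=
  (r j k - Defs.Lfun r t j * Defs.Lfun r t k) / Sfun r t.

Lemma n_der (t : 'rV[R]_N) (k m s : 'I_N) : t != 0 ->
  pderiv (fun x => nmetric g r x m s) k t =
  - beta * (dLf t k m * Defs.Lfun r t s + Defs.Lfun r t m * dLf t k s).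
Proof.
move=> t0.
rewrite /pderiv derive1E.
set fm := fun x => Defs.Lfun r (t + x *: delta_mx 0 k) m.
set fs := fun x => Defs.Lfun r (t + x *: delta_mx 0 k) s.
have -> : (fun x => nmetric g r (t + x *: delta_mx 0 k) m s) =
   (cst (r m s / hpar g ^+ 2) - (cst beta * fm) * fs).
  by apply/funext => x; rewrite nmetricE.
have Hm : is_derive (0:R) 1 fm (dLf t k m) by exact: L_der.
have Hs : is_derive (0:R) 1 fs (dLf t k s) by exact: L_der.
have HM := is_deriveM (is_deriveM (is_derive_cst beta (0:R) 1) Hm) Hs.
have HB := is_deriveB (is_derive_cst (r m s / hpar g ^+ 2) (0:R) 1) HM.
have e1 : (cst beta * fm) 0 = beta * Defs.Lfun r t m.
  by rewrite -[(cst beta * fm) 0]/(beta * fm 0) /fm /= scale0r addr0.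
have e2 : fs 0 = Defs.Lfun r t s by rewrite /fs /= scale0r addr0.
rewrite (@derive_val _ _ _ _ _ _ _ HB) e1 e2 /GRing.scale /=.
ring.
Qed.

Lemma chr_closed (t : 'rV[R]_N) (q p s : 'I_N) : t != 0 ->
  christoffel g r t q p s =
  - beta / Sfun r t ^+ 2 * (r s q - Defs.Lfun r t q * Defs.Lfun r t s) * t 0 p.
Proof.
move=> t0; have Sn : Sfun r t != 0 by rewrite gt_eqF // S_gt0.
rewrite /christoffel.
transitivity (2^-1 * \sum_(m < N) invmx (nmetric g r t) p m *
  (Af t m * (- (2 * beta) / Sfun r t ^+ 2 *
     (r s q - Defs.Lfun r t q * Defs.Lfun r t s)))).
  congr (_ * _); apply: eq_bigr => m _; congr (_ * _).
  rewrite !n_der // /dLf !L_def (rsymE q m) (rsymE s m) (rsymE q s).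
  by field.
rewrite mulr_sumr.
transitivity (\sum_(m < N) (invmx (nmetric g r t) p m * Af t m) *
  (- beta / Sfun r t ^+ 2 * (r s q - Defs.Lfun r t q * Defs.Lfun r t s))).
  apply: eq_bigr => m _.
  have two : (2:R) != 0 by rewrite pnatr_eq0.
  by field.
by rewrite -mulr_suml inv_A // mulrC.
Qed.

Definition muf (t : 'rV[R]_N) (v : 'I_N -> R) :=
  \sum_(q < N) \sum_(k < N)
    - beta / Sfun r t ^+ 2 * (r k q - Defs.Lfun r t q * Defs.Lfun r t k) * v q * v k.

Lemma geo_contr (t : 'rV[R]_N) (v : 'I_N -> R) (p : 'I_N) : t != 0 ->
  \sum_(q < N) \sum_(k < N) christoffel g r t q p k * v q * v k = t 0 p * muf t v.
Proof.
move=> t0; rewrite /muf mulr_sumr; apply: eq_bigr => q _.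
rewrite mulr_sumr; apply: eq_bigr => k _.
by rewrite chr_closed //; ring.
Qed.

End Metric.

Unset Implicit Arguments.

Theorem proposition3p2 (R : realType) (N : nat) (r : 'M[R]_N) (g : R)
    (I : set R) (c : R -> 'rV[R]_N) :
  (2 <= N)%N ->
  r^T = r ->
  posdef r ->
  (forall i : 'I_N, val i = N.-1 ->
     r i i = 1 /\ (forall a : 'I_N, (val a < N.-1)%N -> r i a = 0)) ->
  -2 < g < 2 ->
  open I -> is_interval I ->
  is_geodesic g r I c ->
  exists U : 'M[R]_(2, N), \rank U = 2%N /\ (forall s, I s -> (c s <= U)%MS).
Proof.
move=> N2 rsym rpd _ hg _ Iitv [c0 [der geo]].
set d := fun i => derive1 (Defs.coord c i).
have Hf s i : I s -> is_derive s 1 (Defs.coord c i) (d i s).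
  move=> Is; have [/derivableP + _] := der s i Is.
  by rewrite -derive1E.
have Hd s i : I s -> is_derive s 1 (d i) (derive1 (d i) s).
  move=> Is; have [_ /derivableP] := der s i Is.
  by rewrite -derive1E.
have acc s p : I s ->
    derive1 (d p) s = - (c s 0 p * muf r g (c s) (fun k => d k s)).
  move=> Is; have := geo s p Is.
  rewrite (geo_contr rsym rpd hg (fun k => d k s) p (c0 s Is)).
  by move/eqP; rewrite addr_eq0 => /eqP.
pose W i j s := Defs.coord c i s * d j s - Defs.coord c j s * d i s.
have Wder i j s : I s -> is_derive s 1 (W i j) 0.
  move=> Is.
  have H := is_deriveB (is_deriveM (Hf s i Is) (Hd s j Is))
                       (is_deriveM (Hf s j Is) (Hd s i Is)).
  have -> : W i j = (Defs.coord c i * d j - Defs.coord c j * d i) by apply/funext.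
  apply: is_derive_eq H _.
  rewrite !acc // /GRing.scale /= /Defs.coord.
  ring.
have Wc i j s s' : I s -> I s' -> W i j s = W i j s'.
  by move=> Is Is'; apply: (cst_on_itv Iitv (fun x => Wder i j x)).
have i0lt : (0 < N)%N by apply: leq_trans N2.
pose i0 : 'I_N := Ordinal i0lt.
pose i1 : 'I_N := Ordinal N2.
have [[s0 [Is0 [a [b Wab]]]] | noneW] :=
  pselect (exists s0, I s0 /\ exists a b, W a b s0 != 0).
  exists (mk2 (c s0) (\row_j d j s0)); split.
    by apply: (@rank2 _ _ _ _ a b); rewrite !mxE.
  move=> s Is.
  set D := W a b s0.
  apply: (@in_mk2 _ _ _ _ _
     ((c s 0 a * d b s0 - c s 0 b * d a s0) / D)
     ((c s 0 b * c s0 0 a - c s 0 a * c s0 0 b) / D)) => j.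
  rewrite !mxE.
  have E0 : c s 0 a * W b j s - c s 0 b * W a j s + c s 0 j * W a b s = 0.
    by rewrite /W /Defs.coord; ring.
  rewrite (Wc a b s s0) // (Wc a j s s0) // (Wc b j s s0) // -/D in E0.
  have Ej : c s 0 j * D = - (c s 0 a * W b j s0 - c s 0 b * W a j s0).
    by rewrite -[LHS]subr0 -E0; ring.
  transitivity ((c s 0 j * D) / D); first by field.
  rewrite Ej /D /W /Defs.coord.
  move: Wab; rewrite /W /Defs.coord => Wab.
  by field.
have W0 : forall i j s, I s -> W i j s = 0.
  move=> i j s Is; apply/eqP; apply: contraT => Wn.
  by exfalso; apply: noneW; exists s; split => //; exists i, j.
have [[s0 Is0] | noI] := pselect (exists s0, I s0); last first.
  exists (mk2 (delta_mx 0 i0) (delta_mx 0 i1)); split.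
    by apply: (@rank2 _ _ _ _ i0 i1); rewrite !mxE /= mulr1 mulr0 subr0 oner_eq0.
  by move=> s Is; exfalso; apply: noI; exists s.
case/rV0Pn: (c0 s0 Is0) => a xa.
have [b ba] : exists b : 'I_N, b != a.
  case: (eqVneq a i0) => [->|ai0]; first by exists i1.
  by exists i0; rewrite eq_sym.
pose nf := fun s => \sum_(k < N) Defs.coord c k s * Defs.coord c k s.
have npos s : I s -> nf s != 0.
  move=> Is; apply/eqP => /psumr_eq0P H.
  have : c s != 0 := c0 s Is.
  case/rV0Pn => k; apply/negP; rewrite negbK.
  have := H (fun i _ => sqr_ge0 (c s 0 i)) k isT.
  by rewrite /Defs.coord => /eqP; rewrite mulf_eq0 orbb.
have nder s : I s -> is_derive s 1 nf
    (\sum_(k < N) (Defs.coord c k s *: d k s + Defs.coord c k s *: d k s)).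
  move=> Is.
  have -> : nf = \sum_(k < N) (fun s => Defs.coord c k s * Defs.coord c k s).
    by rewrite fct_sumE.
  exact: is_derive_sum (fun k => is_deriveM (Hf s k Is) (Hf s k Is)).
have Pder i j s : I s ->
    is_derive s 1 (fun s => Defs.coord c i s * Defs.coord c j s / nf s) 0.
  move=> Is.
  have HV := @is_deriveV R nf s _ 1 (npos s Is) (nder s Is).
  have H := is_deriveM (is_deriveM (Hf s i Is) (Hf s j Is)) HV.
  have -> : (fun s => Defs.coord c i s * Defs.coord c j s / nf s) =
     ((Defs.coord c i * Defs.coord c j) * (fun s => (nf s)^-1)) by apply/funext.
  apply: is_derive_eq H _.
  have Hs k : Defs.coord c k s * (\sum_(m < N) Defs.coord c m s * d m s)
              = d k s * nf s.
    rewrite /nf !mulr_sumr; apply: eq_bigr => m _.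
    have := W0 k m s Is; rewrite /W => /eqP; rewrite subr_eq0 => /eqP E.
    by rewrite mulrCA E; ring.
  have nz := npos s Is.
  have -> : \sum_(k < N) (Defs.coord c k s *: d k s + Defs.coord c k s *: d k s)
     = 2 * \sum_(m < N) Defs.coord c m s * d m s.
    by rewrite mulr_sumr; apply: eq_bigr => k _; rewrite /GRing.scale /=; ring.
  rewrite /GRing.scale /=.
  transitivity ((nf s * (Defs.coord c i s * d j s + Defs.coord c j s * d i s)
     - Defs.coord c i s * (Defs.coord c j s * (\sum_(m < N) Defs.coord c m s * d m s))
     - Defs.coord c j s * (Defs.coord c i s * (\sum_(m < N) Defs.coord c m s * d m s)))
     / nf s ^+ 2).
    by rewrite -[(Defs.coord c i * Defs.coord c j) s]/(Defs.coord c i s * Defs.coord c j s); field.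
  rewrite !Hs.
  by rewrite (_ : _ - _ - _ = 0) ?mul0r //; ring.
have Pc i j s : I s ->
    Defs.coord c i s * Defs.coord c j s / nf s =
    Defs.coord c i s0 * Defs.coord c j s0 / nf s0.
  move=> Is.
  exact: (cst_on_itv Iitv (fun x => Pder i j x) Is Is0).
exists (mk2 (c s0) (delta_mx 0 b)); split.
  apply: (@rank2 _ _ _ _ a b).
  by rewrite !mxE !eqxx (eq_sym a b) (negbTE ba) /= mulr1 mulr0 subr0.
move=> s Is.
apply: (@in_mk2 _ _ _ _ _ ((\sum_(i < N) c s0 0 i * c s 0 i) / nf s0) 0) => j.
rewrite mul0r addr0.
have e1 : c s 0 j =
    \sum_(i < N) (Defs.coord c j s * Defs.coord c i s / nf s) * Defs.coord c i s.
  have nz := npos s Is.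
  transitivity (Defs.coord c j s / nf s * nf s); first by rewrite divfK.
  rewrite {2}/nf [RHS](eq_bigr (fun i => Defs.coord c j s / nf s * (Defs.coord c i s * Defs.coord c i s))); last by move=> i _; ring.
  by rewrite -mulr_sumr.
rewrite e1; under eq_bigr => i _ do rewrite (Pc j i s Is).
rewrite mulr_suml mulr_suml; apply: eq_bigr => i _; rewrite /Defs.coord; ring.
Qed.
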